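(* Let $U:\mathbb{C}^*\to\mathbb{C}$ be a reasonable expansion with unique restrictions, between locally small categories, which has the expansion property; assume all morphisms in $\mathbb{C}$ are monomorphisms and $\mathbb{C}^*$ is directed. Let $A\in\mathrm{Ob}(\mathbb{C})$ be such that $\mathrm{Aut}(A)$ is finite. (a) $t^\sim_{\mathbb{C}}(A)$ is finite if and only if $U^{-1}(A)$ is finite and $t^\sim_{\mathbb{C}^*}(\mathcal{A})<\infty$ for all $\mathcal{A}\in U^{-1}(A)$, and in that case $$t^\sim_{\mathbb{C}}(A)=\sum_{\mathcal{A}\in U^{-1}(A)}\frac{|\mathrm{Aut}(\mathcal{A})|}{|\mathrm{Aut}(A)|}\cdot t^\sim_{\mathbb{C}^*}(\mathcal{A}).$$ (b) If $U^{-1}(A)$ is finite and $t^\sim_{\mathbb{C}^*}(\mathcal{A})<\infty$ for all $\mathcal{A}\in U^{-1}(A)$, and $\mathcal{A}_1,\dots,\mathcal{A}_n$ are representatives of the isomorphism classes (in $\mathbb{C}^*$) of objects in $U^{-1}(A)$, then $t^\sim_{\mathbb{C}}(A)=\sum_{i=1}^n t^\sim_{\mathbb{C}^*}(\mathcal{A}_i)$.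
   Context: Write $X\to Y$ if $\hom(X,Y)\ne\varnothing$; a category is directed if for all objects $A,B$ there is $C$ with $A\to C$, $B\to C$. An expansion of $\mathbb{C}$ is a category $\mathbb{C}^*$ with a functor $U:\mathbb{C}^*\to\mathbb{C}$ surjective on objects and injective on hom-sets; we regard $\hom_{\mathbb{C}^*}(\mathcal{A},\mathcal{B})\subseteq\hom_{\mathbb{C}}(U\mathcal{A},U\mathcal{B})$, and $U^{-1}(A)=\{\mathcal{A}:U(\mathcal{A})=A\}$. $U$ is reasonable if for every $e\in\hom(A,B)$ and $\mathcal{A}\in U^{-1}(A)$ there is $\mathcal{B}\in U^{-1}(B)$ with $e\in\hom(\mathcal{A},\mathcal{B})$; it has unique restrictions if for every $\mathcal{B}$ and $e\in\hom(A,U(\mathcal{B}))$ there is exactly one $\mathcal{A}\in U^{-1}(A)$ with $e\in\hom(\mathcal{A},\mathcal{B})$; it has the expansion property if for every $A$ there is $B$ with $\mathcal{A}\to\mathcal{B}$ for all $\mathcal{A}\in U^{-1}(A)$, $\mathcal{B}\in U^{-1}(B)$. In a category $\mathbb{D}$: for $f,f'\in\hom(A,B)$, $f\sim_A f'$ iff $f'=f\cdot\alpha$ for some $\alpha\in\mathrm{Aut}(A)$; $\binom{B}{A}=\hom(A,B)/{\sim_A}$, and $w\cdot(f/{\sim_A})=(w\cdot f)/{\sim_A}$. $C\overset{\sim}{\to}(B)^A_{k,t}$ means that for every $\chi:\binom{C}{A}\to\{0,\dots,k-1\}$ there is $w\in\hom(B,C)$ with $|\chi(w\cdot\binom{B}{A})|\le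 t$; $t^\sim_{\mathbb{D}}(A)$ is the least positive $n$ such that for all $k\ge2$ and all $B$ there is $C$ with $C\overset{\sim}{\to}(B)^A_{k,n}$, and $\infty$ otherwise. *)

(* Defs.v *)
From Stdlib Require Import List Arith ClassicalEpsilon.
Import ListNotations.


Record Cat := {
  ob : Type;
  hom : ob -> ob -> Type;
  comp : forall X Y Z : ob, hom Y Z -> hom X Y -> hom X Z;
  idm : forall X : ob, hom X X;
  comp_assoc : forall X Y Z W (h : hom Z W) (g : hom Y Z) (f : hom X Y),
      comp X Z W h (comp X Y Z g f) = comp X Y W (comp Y Z W h g) f;
  comp_id_l : forall X Y (f : hom X Y), comp X Y Y (idm Y) f = f;
  comp_id_r : forall X Y (f : hom X Y), comp X X Y f (idm X) = f
}.
Arguments hom {c} _ _.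
Arguments comp {c X Y Z} _ _.
Arguments idm {c} _.

Definition arrow {C : Cat} (X Y : ob C) : Prop := inhabited (hom X Y).

Definition directed (C : Cat) : Prop :=
  forall X Y : ob C, exists Z : ob C, arrow X Z /\ arrow Y Z.

Definition all_mono (C : Cat) : Prop :=
  forall (X Y Z : ob C) (h : hom Y Z) (f g : hom X Y), comp h f = comp h g -> f = g.

Definition is_aut {C : Cat} (X : ob C) (a : hom X X) : Prop :=
  exists b : hom X X, comp a b = idm X /\ comp b a = idm X.

Definition isomorphic {C : Cat} (X Y : ob C) : Prop :=
  exists (f : hom X Y) (g : hom Y X), comp g f = idm X /\ comp f g = idm Y.

Definition finite_pred {T : Type} (P : T -> Prop) : Prop :=
  exists l : list T, forall x, P x <-> In x l.

Definition enumerates {T : Type} (l : list T) (P : T -> Prop) : Prop :=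
  NoDup l /\ (forall x, P x <-> In x l).

Definition has_card {T : Type} (P : T -> Prop) (n : nat) : Prop :=
  exists l : list T, enumerates l P /\ length l = n.

(* |P| for a finite P (an arbitrary value, 0, for infinite P) *)
Definition card {T : Type} (P : T -> Prop) : nat :=
  epsilon (inhabits 0) (fun n => has_card P n).

(* A coloring chi : binom(C,A) -> {0,..,k-1}, represented as a map on hom(A,C)
   constant on ~_A classes (f ~_A f . alpha, alpha in Aut(A)). *)
Definition coloring {D : Cat} (A C : ob D) (k : nat) (chi : hom A C -> nat) : Prop :=
  (forall f, chi f < k) /\
  (forall (f : hom A C) (alpha : hom A A), is_aut A alpha -> chi (comp f alpha) = chi f).

Definition erdos_rado_arrow {D : Cat} (C B A : ob D) (k t : nat) : Prop :=
  forall chi : hom A C -> nat, coloring A C k chi ->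
    exists (w : hom B C) (vals : list nat),
      length vals <= t /\ forall f : hom A B, In (chi (comp w f)) vals.

Definition ramsey_prop {D : Cat} (A : ob D) (n : nat) : Prop :=
  forall k, 2 <= k -> forall B : ob D, exists C : ob D, erdos_rado_arrow C B A k n.

(* t^~_D(A): Some n = the least positive n with ramsey_prop; None = infinity *)
Definition tdeg_spec {D : Cat} (A : ob D) (o : option nat) : Prop :=
  match o with
  | Some n => 0 < n /\ ramsey_prop A n /\ forall m, 0 < m -> ramsey_prop A m -> n <= m
  | None => ~ exists n, 0 < n /\ ramsey_prop A n
  end.

Definition tdeg {D : Cat} (A : ob D) : option nat :=
  epsilon (inhabits None) (fun o => tdeg_spec A o).

Definition tval (o : option nat) : nat := match o with Some n => n | None => 0 end.

Record Expansion (C : Cat) := {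
  ecat : Cat;
  Uob : ob ecat -> ob C;
  Uhom : forall X Y : ob ecat, hom X Y -> hom (Uob X) (Uob Y);
  U_id : forall X, Uhom X X (idm X) = idm (Uob X);
  U_comp : forall X Y Z (g : hom Y Z) (f : hom X Y),
      Uhom X Z (comp g f) = comp (Uhom Y Z g) (Uhom X Y f);
  U_surj : forall A : ob C, exists X, Uob X = A;
  U_inj : forall X Y (f g : hom X Y), Uhom X Y f = Uhom X Y g -> f = g
}.
Arguments ecat {C} _.
Arguments Uob {C} _ _.
Arguments Uhom {C} _ {X Y} _.

Section Exp.
Context {C : Cat} (E : Expansion C).

(* e in hom_{C*}(X',Y') : e (a C-morphism X -> Y) is the image of some f : X' -> Y'
   (heterogeneous equality, since Uob X' and X are only propositionally equal) *)
Definition lifts_to (X' Y' : ob (ecat E)) {X Y : ob C} (e : hom X Y) : Prop :=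
  exists f : hom X' Y',
    existT (fun p : ob C * ob C => hom (fst p) (snd p)) (Uob E X', Uob E Y') (Uhom E f)
    = existT (fun p : ob C * ob C => hom (fst p) (snd p)) (X, Y) e.

Definition reasonable : Prop :=
  forall (A B : ob C) (e : hom A B) (X' : ob (ecat E)), Uob E X' = A ->
    exists Y' : ob (ecat E), Uob E Y' = B /\ lifts_to X' Y' e.

Definition unique_restrictions : Prop :=
  forall (Y' : ob (ecat E)) (A : ob C) (e : hom A (Uob E Y')),
    exists X' : ob (ecat E),
      (Uob E X' = A /\ lifts_to X' Y' e) /\
      forall X'', Uob E X'' = A /\ lifts_to X'' Y' e -> X'' = X'.

Definition expansion_property : Prop :=
  forall A : ob C, exists B : ob C,
    forall X' Y' : ob (ecat E), Uob E X' = A -> Uob E Y' = B -> arrow X' Y'.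

End Exp.

(* Main.v *)
Require Import Defs.
From Stdlib Require Import List Arith QArith.
From Stdlib Require Import Lia Classical ClassicalEpsilon FunctionalExtensionality PropExtensionality ProofIrrelevance Eqdep.
Import ListNotations.

Section Helpers.
Local Open Scope nat_scope.

Lemma ex_min (P : nat -> Prop) : (exists n, P n) -> exists n, P n /\ forall m, P m -> n <= m.
Proof.
  intros [n Hn]. revert Hn. induction n as [n IH] using lt_wf_ind. intros Hn.
  destruct (classic (exists m, m < n /\ P m)) as [[m [Hm Pm]]|Hno].
  - exact (IH m Hm Pm).
  - exists n. split; auto. intros m Pm. destruct (le_lt_dec n m); auto.
    exfalso; apply Hno; eauto.
Qed.

Lemma has_card_unique {T} (P : T -> Prop) n m : has_card P n -> has_card P m -> n = m.
Proof.
  intros [l [[Hl Pl] <-]] [l' [[Hl' Pl'] <-]].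
  apply Nat.le_antisymm; apply NoDup_incl_length; auto; intros x Hx.
  - apply Pl', Pl, Hx.
  - apply Pl, Pl', Hx.
Qed.

Lemma card_spec {T} (P : T -> Prop) n : has_card P n -> card P = n.
Proof.
  intros H. unfold card. apply (has_card_unique P); auto.
  apply epsilon_spec. eauto.
Qed.

Lemma finite_enum {T} (P : T -> Prop) : finite_pred P -> exists l, enumerates l P.
Proof.
  intros [l Hl].
  assert (H : forall l0 : list T, exists l' : list T, NoDup l' /\ forall x, In x l' <-> In x l0).
  { induction l0 as [|a l0 [l' [N H]]].
    - exists []. split; [constructor|]. intros; tauto.
    - destruct (classic (In a l')).
      + exists l'. split; auto. intros x; rewrite H; simpl. split; [tauto|].
        intros [->|]; auto. apply H; auto.
      + exists (a :: l'). split; [constructor; auto|]. intros x; simpl; rewrite H; tauto. }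
  destruct (H l) as [l' [N H']]. exists l'. split; auto. intros x. rewrite Hl, H'. tauto.
Qed.

Lemma enum_has_card {T} (P : T -> Prop) l : enumerates l P -> has_card P (length l).
Proof. intros H; exists l; auto. Qed.

Lemma not_finite_lists {T} (P : T -> Prop) : ~ finite_pred P ->
  forall n, exists l, NoDup l /\ length l = n /\ forall x, In x l -> P x.
Proof.
  intros HP n. induction n as [|n [l [N [L H]]]].
  - exists []. split; [constructor|]. split; [reflexivity|]. simpl; tauto.
  - assert (exists x, P x /\ ~ In x l) as [x [Px Nx]].
    { apply NNPP; intros Hc. apply HP. exists l. intros x; split; auto.
      intros Px. apply NNPP; intros Ni. apply Hc; eauto. }
    exists (x :: l). repeat split; [constructor; auto|simpl; lia|].
    intros y [<-|Hy]; auto.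
Qed.

Definition pb (P : Prop) : bool := if excluded_middle_informative P then true else false.
Lemma pb_true P : pb P = true <-> P.
Proof. unfold pb; destruct excluded_middle_informative; split; auto; discriminate. Qed.

Lemma filter_le1 {T} (l : list T) (Q : T -> bool) : NoDup l ->
  (forall x y, In x l -> In y l -> Q x = true -> Q y = true -> x = y) -> length (filter Q l) <= 1.
Proof.
  induction l as [|a l IH]; intros N H; simpl; auto.
  inversion N; subst.
  destruct (Q a) eqn:Qa; simpl.
  - assert (filter Q l = []) as ->; simpl; auto.
    destruct (filter Q l) as [|b r] eqn:F; auto.
    assert (In b (filter Q l)) as Hb by (rewrite F; simpl; auto).
    apply filter_In in Hb as [Hb Qb].
    exfalso. assert (a = b) by (apply H; simpl; auto). subst; auto.
  - apply IH; auto. intros; apply H; simpl; auto.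
Qed.

Lemma filter_eq1 {T} (l : list T) (Q : T -> bool) x0 : NoDup l -> In x0 l -> Q x0 = true ->
  (forall y, In y l -> Q y = true -> y = x0) -> length (filter Q l) = 1.
Proof.
  intros N I Q0 H. apply Nat.le_antisymm.
  - apply filter_le1; auto. intros x y Hx Hy Qx Qy. rewrite (H x), (H y); auto.
  - destruct (filter Q l) eqn:F; simpl; [|lia].
    assert (In x0 (filter Q l)) by (apply filter_In; auto). rewrite F in H0; destruct H0.
Qed.

Lemma double_count {T U} (l : list T) (m : list U) (P : T -> U -> bool) :
  list_sum (map (fun x => length (filter (P x) m)) l) =
  list_sum (map (fun u => length (filter (fun x => P x u) l)) m).
Proof.
  revert l. induction m as [|u m IH]; intros l; simpl.
  - induction l; simpl; auto.
  - rewrite <- IH. clear IH. induction l as [|x l IH]; simpl; auto.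
    destruct (P x u); simpl; lia.
Qed.

Lemma sum_swap {T U} (l : list T) (m : list U) (f : T -> U -> nat) :
  list_sum (map (fun x => list_sum (map (fun y => f x y) m)) l) =
  list_sum (map (fun y => list_sum (map (fun x => f x y) l)) m).
Proof.
  revert m. induction l as [|x l IH]; intros m; simpl.
  - induction m; simpl; auto.
  - rewrite IH. clear IH. induction m as [|y m IH]; simpl; auto. lia.
Qed.

Lemma sum_const_mul {T} (l : list T) (f : T -> nat) c :
  list_sum (map (fun x => f x * c) l) = list_sum (map f l) * c.
Proof. induction l; simpl; lia. Qed.

Lemma sum_single (f : nat -> nat) n i0 : i0 < n -> (forall i, i < n -> i <> i0 -> f i = 0) ->
  list_sum (map f (seq 0 n)) = f i0.
Proof.
  assert (G : forall s n, s <= i0 < s + n -> (forall i, s <= i < s + n -> i <> i0 -> f i = 0) ->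
     list_sum (map f (seq s n)) = f i0).
  { intros s n0; revert s; induction n0 as [|n0 IH]; intros s Hs H; [lia|]. simpl.
    destruct (Nat.eq_dec s i0) as [->|Hne].
    - assert (list_sum (map f (seq (S i0) n0)) = 0) as ->; [|lia].
      clear IH. assert (forall s', i0 < s' -> (forall i, s' <= i < s' + n0 -> f i = 0) -> list_sum (map f (seq s' n0)) = 0).
      { clear. induction n0; intros s' Hs H; simpl; auto. rewrite H by lia. rewrite IHn0; auto; intros; apply H; lia. }
      apply H0; [lia|]. intros; apply H; lia.
    - rewrite H by lia. simpl. apply IH; [lia|]. intros; apply H; lia. }
  intros; apply G; simpl; [lia|]. intros; apply H0; lia.
Qed.

Lemma sum_le {T} (l : list T) f g : (forall x, In x l -> f x <= g x) ->
  list_sum (map f l) <= list_sum (map g l).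
Proof. induction l; simpl; intros H; auto.
  assert (list_sum (map f l) <= list_sum (map g l)) by (apply IHl; auto).
  specialize (H a (or_introl eq_refl)). lia. Qed.

Lemma sum_ext {T} (l : list T) f g : (forall x, In x l -> f x = g x) ->
  list_sum (map f l) = list_sum (map g l).
Proof. induction l as [|a l IH]; simpl; intros H; [reflexivity|]. rewrite (H a), IH; auto. Qed.

Lemma sum_ones {T} (l : list T) : list_sum (map (fun _ => 1) l) = length l.
Proof. induction l; simpl; auto. Qed.

End Helpers.

Section Gen.
Local Open Scope nat_scope.
Context (D : Cat).

Definition harrow (Cc B A : ob D) (k t : nat) : Prop :=
  forall chi : hom A Cc -> nat, (forall f, chi f < k) ->
    exists (w : hom B Cc) (vals : list nat),
      length vals <= t /\ forall f : hom A B, In (chi (comp w f)) vals.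

Definition hprop (A : ob D) (n : nat) : Prop :=
  forall k, 2 <= k -> forall B : ob D, exists Cc : ob D, harrow Cc B A k n.

Lemma aut_id (A : ob D) : is_aut A (idm A).
Proof. exists (idm A). rewrite comp_id_l. auto. Qed.

Lemma aut_comp (A : ob D) a b : is_aut A a -> is_aut A b -> is_aut A (comp a b).
Proof.
  intros [a' [Ha1 Ha2]] [b' [Hb1 Hb2]]. exists (comp b' a'). split.
  - rewrite <- comp_assoc, (comp_assoc _ _ _ _ _ b b' a'), Hb1, comp_id_l; auto.
  - rewrite <- comp_assoc, (comp_assoc _ _ _ _ _ a' a b), Ha2, comp_id_l; auto.
Qed.

Lemma aut_inv (A : ob D) a : is_aut A a -> exists b, is_aut A b /\ comp a b = idm A /\ comp b a = idm A.
Proof. intros [b [H1 H2]]. exists b. split; auto. exists a; auto. Qed.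

Lemma ramsey_0 (A : ob D) : ~ ramsey_prop A 0.
Proof.
  intros H. destruct (H 2 (le_n 2) A) as [Cc HC].
  destruct (HC (fun _ => 0)) as [w [vals [Hl Hv]]].
  - split; auto. 
  - destruct vals; simpl in Hl; [|lia]. exact (Hv (idm A)).
Qed.

Lemma hprop_0 (A : ob D) : ~ hprop A 0.
Proof.
  intros H. destruct (H 2 (le_n 2) A) as [Cc HC].
  destruct (HC (fun _ => 0)) as [w [vals [Hl Hv]]].
  - auto.
  - destruct vals; simpl in Hl; [|lia]. exact (Hv (idm A)).
Qed.

Lemma ramsey_mono (A : ob D) n m : ramsey_prop A n -> n <= m -> ramsey_prop A m.
Proof.
  intros H Hnm k Hk B. destruct (H k Hk B) as [Cc HC]. exists Cc.
  intros chi Hchi. destruct (HC chi Hchi) as [w [vals [Hl Hv]]]. exists w, vals. split; auto; lia.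
Qed.

Lemma tdeg_ok (A : ob D) : tdeg_spec A (tdeg A).
Proof.
  unfold tdeg. apply epsilon_spec.
  destruct (classic (exists n, 0 < n /\ ramsey_prop A n)) as [Hex|Hno].
  - destruct (ex_min _ Hex) as [n [[Hn Rn] Hmin]]. exists (Some n). simpl. refine (conj Hn (conj Rn _)). intros m Hm Rm; apply Hmin; auto.
  - exists None. exact Hno.
Qed.

Lemma tdeg_eq (A : ob D) o : tdeg_spec A o -> tdeg A = o.
Proof.
  intros H. pose proof (tdeg_ok A) as H'. destruct (tdeg A) as [n|], o as [m|]; simpl in *.
  - f_equal. apply Nat.le_antisymm; [apply H'|apply H]; tauto.
  - exfalso; apply H; exists n; tauto.
  - exfalso; apply H'; exists m; tauto.
  - auto.
Qed.

Lemma tdeg_Some (A : ob D) n : tdeg A = Some n -> 0 < n /\ ramsey_prop A n /\ forall m, 0 < m -> ramsey_prop A m -> n <= m.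
Proof. intros H. pose proof (tdeg_ok A) as H'. rewrite H in H'. exact H'. Qed.

Lemma tdeg_None (A : ob D) : tdeg A = None -> forall n, ~ ramsey_prop A n.
Proof.
  intros H n Rn. pose proof (tdeg_ok A) as H'. rewrite H in H'. apply H'.
  destruct n. { destruct (ramsey_0 A Rn). } exists (S n); split; auto; lia.
Qed.

Lemma cancel {X Y Z : ob D} (g : hom Y X) (f : hom X Y) (x : hom Z X) :
  comp g f = idm X -> comp g (comp f x) = x.
Proof. intros H. rewrite comp_assoc, H, comp_id_l. auto. Qed.

Ltac rnorm := repeat rewrite <- comp_assoc.

Lemma iso_sym (X Y : ob D) : isomorphic X Y -> isomorphic Y X.
Proof. intros [f [g [H1 H2]]]. exists g, f. auto. Qed.

Lemma iso_trans (X Y Z : ob D) : isomorphic X Y -> isomorphic Y Z -> isomorphic X Z.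
Proof.
  intros [f [f' [H1 H2]]] [g [g' [H3 H4]]]. exists (comp g f), (comp f' g'). split.
  - rewrite <- comp_assoc, (comp_assoc _ _ _ _ _ g' g f), H3, comp_id_l. auto.
  - rewrite <- comp_assoc, (comp_assoc _ _ _ _ _ f f' g'), H2, comp_id_l. auto.
Qed.

Lemma iso_ramsey (X Y : ob D) n : isomorphic X Y -> ramsey_prop X n -> ramsey_prop Y n.
Proof.
  intros [h [h' [H1 H2]]] R k Hk B. destruct (R k Hk B) as [Cc HC]. exists Cc.
  intros chi [Hb Hi].
  destruct (HC (fun f => chi (comp f h'))) as [w [vals [Hl Hv]]].
  - split; [intros; apply Hb|]. intros f alpha Ha.
    assert (Hb' : is_aut Y (comp h (comp alpha h'))).
    { destruct Ha as [b [Hb1 Hb2]]. exists (comp h (comp b h')). split.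
      - rnorm. rewrite (cancel h' h _ H1), (cancel alpha b _ Hb1). auto.
      - rnorm. rewrite (cancel h' h _ H1), (cancel b alpha _ Hb2). auto. }
    transitivity (chi (comp (comp f h') (comp h (comp alpha h')))); [|apply Hi; auto].
    f_equal. rnorm. rewrite (cancel h' h _ H1). auto.
  - exists w, vals. split; auto. intros f.
    specialize (Hv (comp f h)).
    replace (comp w f) with (comp (comp w (comp f h)) h'); auto.
    rnorm. rewrite H2, comp_id_r. auto.
Qed.

Lemma iso_tdeg (X Y : ob D) : isomorphic X Y -> tdeg X = tdeg Y.
Proof.
  intros H. symmetry. apply tdeg_eq. pose proof (tdeg_ok X) as HX.
  destruct (tdeg X) as [n|]; simpl in *.
  - destruct HX as [Hn [Rn Hm]]. split; auto. split; [eapply iso_ramsey; eauto|].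
    intros m Hm0 Rm. apply Hm; auto. eapply iso_ramsey; [apply iso_sym|]; eauto.
  - intros [n [Hn Rn]]. apply HX. exists n. split; auto. eapply iso_ramsey; [apply iso_sym|]; eauto.
Qed.

End Gen.

Section Enc.
Local Open Scope nat_scope.
Definition enc (k : nat) (l : list nat) : nat := fold_right (fun x acc => x + k * acc) 0 l.
Definition digit (k j v : nat) : nat := (v / k ^ j) mod k.

Lemma enc_digit k l : 0 < k -> (forall x, In x l -> x < k) -> forall j, j < length l ->
  digit k j (enc k l) = nth j l 0.
Proof.
  intros Hk. induction l as [|x l IH]; intros Hl j Hj; simpl in *; [lia|].
  unfold digit in *. destruct j as [|j].
  - simpl nth. rewrite Nat.pow_0_r, Nat.div_1_r, Nat.mul_comm, Nat.Div0.mod_add, Nat.mod_small; auto.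
  - simpl nth. rewrite Nat.pow_succ_r', <- Nat.Div0.div_div, Nat.mul_comm, Nat.div_add by lia.
    rewrite (Nat.div_small x k) by (apply Hl; auto). simpl. apply IH; [intros; apply Hl; auto|lia].
Qed.

Lemma enc_bound k l : 0 < k -> (forall x, In x l -> x < k) -> enc k l < k ^ length l.
Proof.
  intros Hk. induction l as [|x l IH]; intros Hl; simpl; [lia|].
  assert (enc k l < k ^ length l) by (apply IH; intros; apply Hl; simpl; auto). assert (x < k) by (apply Hl; simpl; auto). nia.
Qed.
End Enc.

Section Part1.
Local Open Scope nat_scope.
Context (D : Cat) (A : ob D) (auts : list (hom A A))
  (Hnd : NoDup auts) (Hauts : forall al, is_aut A al <-> In al auts).

Let a := length auts.

Lemma a_pos : 0 < a.
Proof. unfold a. pose proof (proj1 (Hauts _) (aut_id D A)) as H. destruct auts; simpl in *; [destruct H|lia]. Qed.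

Definition cls {Cc : ob D} (f : hom A Cc) : hom A Cc -> Prop :=
  fun g => exists al, is_aut A al /\ g = comp f al.
Definition rep {Cc : ob D} (f : hom A Cc) : hom A Cc := epsilon (inhabits f) (cls f).

Lemma rep_in {Cc} (f : hom A Cc) : exists al, is_aut A al /\ rep f = comp f al.
Proof. change (cls f (rep f)). unfold rep. apply epsilon_spec. exists f, (idm A). split; [apply aut_id|]. rewrite comp_id_r; auto. Qed.

Lemma cls_eq {Cc} (f : hom A Cc) b : is_aut A b -> cls (comp f b) = cls f.
Proof.
  intros Hb. apply functional_extensionality; intros g. apply propositional_extensionality.
  unfold cls. destruct (aut_inv D A b Hb) as [b' [Hb' [H1 H2]]]. split.
  - intros [al [Hal ->]]. exists (comp b al). split; [apply aut_comp; auto|]. rewrite comp_assoc; auto.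
  - intros [al [Hal ->]]. exists (comp b' al). split; [apply aut_comp; auto|].
    rewrite <- comp_assoc. rewrite (comp_assoc _ _ _ _ _ b b' al), H1, comp_id_l. auto.
Qed.

Lemma rep_inv {Cc} (f : hom A Cc) b : is_aut A b -> rep (comp f b) = rep f.
Proof.
  intros Hb. unfold rep. rewrite (cls_eq f b Hb). f_equal. apply proof_irrelevance.
Qed.

Lemma back_to_rep {Cc} (f : hom A Cc) : exists j, j < a /\ f = comp (rep f) (nth j auts (idm A)).
Proof.
  destruct (rep_in f) as [b [Hb Hr]]. destruct (aut_inv D A b Hb) as [g [Hg [H1 H2]]].
  destruct (In_nth auts g (idm A)) as [j [Hj Hn]]; [apply Hauts; auto|].
  exists j. split; auto. rewrite Hn, Hr, <- comp_assoc, H1, comp_id_r. auto.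
Qed.

Lemma ramsey_to_hom n : ramsey_prop A n -> hprop D A (a * n).
Proof.
  intros R k Hk B. pose proof a_pos as Ha.
  assert (HK : 2 <= k ^ a).
  { assert (k ^ 1 <= k ^ a) by (apply Nat.pow_le_mono_r; lia). simpl in H. lia. }
  destruct (R _ HK B) as [Cc HC]. exists Cc. intros chi Hchi.
  set (chi' := fun f : hom A Cc => enc k (map (fun al => chi (comp (rep f) al)) auts)).
  destruct (HC chi') as [w [vals [Hl Hv]]].
  - split.
    + intros f. unfold chi'. replace a with (length (map (fun al => chi (comp (rep f) al)) auts)).
      * apply enc_bound; [lia|]. intros x Hx. apply in_map_iff in Hx as [y [<- _]]. auto.
      * apply length_map.
    + intros f al Hal. unfold chi'. rewrite rep_inv; auto.
  - exists w, (flat_map (fun v => map (fun j => digit k j v) (seq 0 a)) vals). split.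
    + rewrite length_flat_map.
      assert (list_sum (map (fun x => length (map (fun j => digit k j x) (seq 0 a))) vals) = a * length vals) as ->.
      { clear. induction vals; simpl; auto. rewrite length_map, length_seq, IHvals. lia. }
      apply Nat.mul_le_mono_l; auto.
    + intros f. apply in_flat_map. exists (chi' (comp w f)). split; auto. apply in_map_iff.
      destruct (back_to_rep (comp w f)) as [j [Hj Hr]].
      exists j. split; [|apply in_seq; lia]. unfold chi'.
      rewrite enc_digit; [| lia | | rewrite length_map; auto].
      * rewrite (nth_indep _ 0 (chi (comp (rep (comp w f)) (idm A)))) by (rewrite length_map; auto).
        rewrite (map_nth (fun al : hom A A => chi (comp (rep (comp w f)) al)) auts (idm A) j). cbv beta. rewrite <- Hr. auto.
      * intros x Hx. apply in_map_iff in Hx as [y [<- _]]. auto.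
Qed.

Definition pos {Cc} (f : hom A Cc) : nat :=
  epsilon (inhabits 0) (fun j => j < a /\ f = comp (rep f) (nth j auts (idm A))).

Lemma pos_spec {Cc} (f : hom A Cc) : pos f < a /\ f = comp (rep f) (nth (pos f) auts (idm A)).
Proof. unfold pos. apply (epsilon_spec (inhabits 0) (fun j => j < a /\ f = comp (rep f) (nth j auts (idm A)))). apply back_to_rep. Qed.

Lemma pos_unique {Cc} (Hm : all_mono D) (f : hom A Cc) j : j < a -> f = comp (rep f) (nth j auts (idm A)) -> pos f = j.
Proof.
  intros Hj Hf. destruct (pos_spec f) as [Hp Hf'].
  apply (proj1 (NoDup_nth auts (idm A)) Hnd); auto.
  apply (Hm _ _ _ (rep f)). rewrite <- Hf, <- Hf'. auto.
Qed.

Lemma block_div c x : c * a <= x < c * a + a -> x / a = c.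
Proof. intros H. pose proof a_pos. symmetry. apply (Nat.div_unique x a c (x - c * a)); lia. Qed.

Lemma NoDup_blocks S : NoDup S -> NoDup (flat_map (fun c => seq (c * a) a) S).
Proof.
  induction S as [|c S IH]; intros N; simpl; [constructor|]. inversion N; subst.
  apply NoDup_app; auto using seq_NoDup.
  intros x Hx Hx'. apply in_seq in Hx. apply in_flat_map in Hx' as [c' [Hc' Hx']]. apply in_seq in Hx'.
  assert (c = c') by (rewrite <- (block_div c x), <- (block_div c' x); auto). subst. auto.
Qed.

Lemma hom_to_ramsey (Hm : all_mono D) t : hprop D A t -> ramsey_prop A (t / a).
Proof.
  intros H k Hk B. pose proof a_pos as Ha.
  destruct (H (k * a) ltac:(nia) B) as [Cc HC]. exists Cc. intros chi' [Hb Hi].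
  destruct (HC (fun f => chi' f * a + pos f)) as [w [vals [Hl Hv]]].
  { intros f. pose proof (Hb f). pose proof (proj1 (pos_spec f)). nia. }
  assert (full : forall f : hom A B, forall j, j < a -> In (chi' (comp w f) * a + j) vals).
  { intros f j Hj. destruct (rep_in (comp w f)) as [g [Hg Hr]].
    assert (Hnj : is_aut A (nth j auts (idm A))) by (apply Hauts, nth_In; auto).
    set (beta := comp g (nth j auts (idm A))).
    assert (Hbeta : is_aut A beta) by (apply aut_comp; auto).
    specialize (Hv (comp f beta)). simpl in Hv.
    assert (E1 : comp w (comp f beta) = comp (comp w f) beta) by apply comp_assoc.
    rewrite E1 in Hv. rewrite Hi in Hv by auto.
    rewrite (pos_unique Hm (comp (comp w f) beta) j) in Hv; auto.
    rewrite rep_inv, Hr by auto. unfold beta. rewrite <- !comp_assoc. auto. }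
  set (S := filter (fun c => forallb (fun j => if in_dec Nat.eq_dec (c * a + j) vals then true else false) (seq 0 a))
                   (nodup Nat.eq_dec (map (fun v => v / a) vals))).
  exists w, S. split.
  - apply Nat.div_le_lower_bound; [lia|].
    assert (length (flat_map (fun c => seq (c * a) a) S) = a * length S) as <-.
    { clear. induction S; simpl; auto. rewrite length_app, length_seq, IHS. lia. }
    transitivity (length vals); auto. apply NoDup_incl_length.
    + apply NoDup_blocks. apply NoDup_filter, NoDup_nodup.
    + intros x Hx. apply in_flat_map in Hx as [c [Hc Hx]]. apply in_seq in Hx.
      apply filter_In in Hc as [_ Hc]. rewrite forallb_forall in Hc.
      specialize (Hc (x - c * a) ltac:(apply in_seq; lia)).
      destruct in_dec as [Hin|]; [|discriminate]. replace x with (c * a + (x - c * a)) by lia. auto.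
  - intros f. apply filter_In. split.
    + apply nodup_In, in_map_iff. exists (chi' (comp w f) * a + 0). split.
      * apply block_div; lia.
      * apply full; auto.
    + apply forallb_forall. intros j Hj. apply in_seq in Hj.
      destruct in_dec as [|Hn]; auto. exfalso. apply Hn. apply full; lia.
Qed.

Lemma deg_link (Hm : all_mono D) m : tdeg A = Some m ->
  hprop D A (a * m) /\ forall t, hprop D A t -> a * m <= t.
Proof.
  intros Ht. destruct (tdeg_Some D A m Ht) as [Hm0 [Rm Hmin]]. split.
  - apply ramsey_to_hom; auto.
  - intros t Ht'. pose proof (hom_to_ramsey Hm t Ht') as R. pose proof a_pos.
    destruct (t / a) eqn:E. { destruct (ramsey_0 D A R). }
    rewrite <- E in R. assert (m <= t / a) by (apply Hmin; auto; lia).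
    pose proof (Nat.Div0.mul_div_le t a). nia.
Qed.

Lemma deg_link_None (Hm : all_mono D) : tdeg A = None -> forall t, ~ hprop D A t.
Proof. intros H t Ht. apply (tdeg_None D A H (t / a)). apply hom_to_ramsey; auto. Qed.

Lemma deg_from_hom (Hm : all_mono D) S : hprop D A S -> (forall t, hprop D A t -> S <= t) ->
  exists n, tdeg A = Some n /\ a * n = S.
Proof.
  intros HS Hmin. pose proof a_pos. pose proof (hom_to_ramsey Hm S HS) as R.
  pose proof (tdeg_ok D A) as Hs. destruct (tdeg A) as [n|] eqn:E.
  - exists n. split; auto. destruct Hs as [Hn [Rn Hmn]].
    assert (n <= S / a).
    { apply Hmn; auto. destruct (S / a) eqn:E'; [|lia]. destruct (ramsey_0 D A R). }
    pose proof (Hmin _ (ramsey_to_hom n Rn)). pose proof (Nat.Div0.mul_div_le S a). nia.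
  - exfalso. apply (tdeg_None D A E _ R).
Qed.

End Part1.

Section Casts.
Context {C : Cat}.
Definition tr {Z Z' W W' : ob C} (p : Z = Z') (q : W = W') (f : hom Z W) : hom Z' W' :=
  match p in _ = Z1 return hom Z1 W' with
  | eq_refl => match q in _ = W1 return hom Z W1 with eq_refl => f end end.

Lemma tr_comp {Z Z' W W' V V' : ob C} (p : Z = Z') (q : W = W') (r : V = V') (f : hom Z W) (g : hom W V) :
  tr p r (comp g f) = comp (tr q r g) (tr p q f).
Proof. destruct p, q, r; reflexivity. Qed.

Lemma tr_id {Z Z' : ob C} (p : Z = Z') : tr p p (idm Z) = idm Z'.
Proof. destruct p; reflexivity. Qed.

Lemma tr_inj {Z Z' W W' : ob C} (p : Z = Z') (q : W = W') f g : tr p q f = tr p q g -> f = g.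
Proof. destruct p, q; auto. Qed.

Lemma tr_tr {Z Z' Z'' W W' W'' : ob C} (p : Z = Z') (p' : Z' = Z'') (q : W = W') (q' : W' = W'') f :
  tr p' q' (tr p q f) = tr (eq_trans p p') (eq_trans q q') f.
Proof. destruct p, q, p', q'; reflexivity. Qed.

Lemma tr_refl {Z W : ob C} (f : hom Z W) : tr eq_refl eq_refl f = f.
Proof. reflexivity. Qed.

Lemma exT_tr (Z1 W1 Z2 W2 : ob C) (f1 : hom Z1 W1) (f2 : hom Z2 W2) :
  existT (fun p : ob C * ob C => hom (fst p) (snd p)) (Z1, W1) f1 =
  existT (fun p : ob C * ob C => hom (fst p) (snd p)) (Z2, W2) f2 ->
  exists (p : Z1 = Z2) (q : W1 = W2), tr p q f1 = f2.
Proof.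
  intros H. assert (H1 := f_equal (@projT1 _ _) H). simpl in H1. injection H1 as E1 E2.
  subst Z2 W2. apply Eqdep.EqdepTheory.inj_pair2 in H. subst. exists eq_refl, eq_refl. reflexivity.
Qed.
End Casts.

Section Exp.
Local Open Scope nat_scope.
Context (C : Cat) (E : Expansion C).
Notation CE := (ecat E).
Notation U := (Uob E).
Notation Uh := (Uhom E).

Lemma lifts_iff (X Y : ob CE) (Z W : ob C) (e : hom Z W) :
  lifts_to E X Y e <-> exists (p : U X = Z) (q : U Y = W) (g : hom X Y), tr p q (Uh g) = e.
Proof.
  split.
  - intros [g H]. destruct (exT_tr _ _ _ _ _ _ H) as [p [q Hpq]]. exists p, q, g. auto.
  - intros [p [q [g H]]]. subst Z W. simpl in H. subst e. exists g. reflexivity.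
Qed.

Lemma lifts_intro (X Y : ob CE) (Z W : ob C) (p : U X = Z) (q : U Y = W) (g : hom X Y) :
  lifts_to E X Y (tr p q (Uh g)).
Proof. apply lifts_iff. eauto. Qed.

Lemma Uh_tr_comp {X Y Z : ob CE} {A0 B0 C0 : ob C} (p : U X = A0) (q : U Y = B0) (r : U Z = C0)
  (f : hom X Y) (g : hom Y Z) : tr p r (Uh (comp g f)) = comp (tr q r (Uh g)) (tr p q (Uh f)).
Proof. rewrite U_comp. apply tr_comp. Qed.

Lemma ecat_mono : all_mono C -> all_mono CE.
Proof.
  intros Hm X Y Z h f g H. apply U_inj. apply (Hm _ _ _ (Uh h)). rewrite <- !U_comp, H. auto.
Qed.

Context (A : ob C).

Lemma UB_gen (N : ob CE -> nat) (l : list (ob CE)) :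
  (forall X, In X l -> U X = A /\ hprop CE X (N X)) ->
  forall k, 2 <= k -> forall Bs : ob CE, exists Cs : ob CE,
    forall chi : hom A (U Cs) -> nat, (forall f, chi f < k) ->
      exists (w : hom Bs Cs) (vals : list nat), length vals <= list_sum (map N l) /\
        forall X (p : U X = A) (g : hom X Bs), In X l -> In (chi (tr p eq_refl (Uh (comp w g)))) vals.
Proof.
  induction l as [|X l IH]; intros Hl k Hk Bs.
  - exists Bs. intros chi _. exists (idm Bs), []. split; simpl; [auto|intros _ _ _ []].
  - destruct (IH (fun Y HY => Hl Y (or_intror HY)) k Hk Bs) as [Cs' HC'].
    destruct (Hl X (or_introl eq_refl)) as [pX HX].
    destruct (HX k Hk Cs') as [Cs HCs]. exists Cs. intros chi Hchi.
    destruct (HCs (fun g => chi (tr pX eq_refl (Uh g)))) as [w1 [vals1 [Hl1 Hv1]]]; [auto|].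
    destruct (HC' (fun f => chi (comp (Uh w1) f))) as [w2 [vals2 [Hl2 Hv2]]]; [auto|].
    exists (comp w1 w2), (vals1 ++ vals2). split; [rewrite length_app; simpl; lia|].
    intros Y p g [<-|HY]; apply in_or_app.
    + left. rewrite (proof_irrelevance _ p pX). rewrite <- comp_assoc. apply Hv1.
    + right. rewrite <- comp_assoc. rewrite (Uh_tr_comp p eq_refl eq_refl). apply Hv2; auto.
Qed.

Lemma UB (N : ob CE -> nat) (l : list (ob CE)) (Huniq : unique_restrictions E) :
  (forall X, U X = A -> In X l) ->
  (forall X, In X l -> U X = A /\ hprop CE X (N X)) ->
  hprop C A (list_sum (map N l)).
Proof.
  intros Hcov Hl k Hk B. destruct (U_surj C E B) as [Bs <-].
  destruct (UB_gen N l Hl k Hk Bs) as [Cs HC]. exists (U Cs). intros chi Hchi.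
  destruct (HC chi Hchi) as [w [vals [Hlen Hv]]]. exists (Uh w), vals. split; auto.
  intros f. destruct (Huniq Bs A f) as [X [[pX HX] _]].
  apply lifts_iff in HX as [p [q [g Hg]]]. rewrite (proof_irrelevance _ q eq_refl) in Hg.
  subst f.
  change (Uh w) with (tr (eq_refl (U Bs)) (eq_refl (U Cs)) (Uh w)).
  rewrite <- tr_comp, <- U_comp. apply Hv. apply Hcov; auto.
Qed.


Definition bad (X : ob CE) (m k : nat) (Bs : ob CE) : Prop :=
  forall Cs : ob CE, exists chi : hom X Cs -> nat, (forall g, chi g < k) /\
    forall (w : hom Bs Cs) vals, (forall g : hom X Bs, In (chi (comp w g)) vals) -> m < length vals.

Lemma not_hprop_bad X m : ~ hprop CE X m -> exists k, 2 <= k /\ exists Bs, bad X m k Bs.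
Proof.
  intros H. apply NNPP; intros Hne. apply H. intros k Hk Bs. apply NNPP; intros Hn.
  apply Hne. exists k; split; auto. exists Bs. intros Cs. apply NNPP; intros Hn2.
  apply Hn. exists Cs. intros chi Hchi. apply NNPP; intros Hn3. apply Hn2. exists chi. split; auto.
  intros w vals Hv. destruct (le_lt_dec (length vals) m); auto. exfalso; apply Hn3; exists w, vals; split; auto.
Qed.

Lemma bad_mono X m k k' Bs Bs' : bad X m k Bs -> k <= k' -> arrow Bs Bs' -> bad X m k' Bs'.
Proof.
  intros H Hk [u] Cs. destruct (H Cs) as [chi [Hb Hv]]. exists chi. split; [intros g; specialize (Hb g); lia|].
  intros w vals Hw. apply (Hv (comp w u)). intros g. rewrite <- comp_assoc. apply Hw.
Qed.

Lemma common_bad (Hdir : directed CE) (M : ob CE -> nat) (l : list (ob CE)) (Bs0 : ob CE) :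
  (forall X, In X l -> exists k, 2 <= k /\ exists Bs, bad X (M X) k Bs) ->
  exists K, 2 <= K /\ exists Bs, forall X, In X l -> bad X (M X) K Bs.
Proof.
  induction l as [|X l IH]; intros H.
  - exists 2. split; auto. exists Bs0. intros _ [].
  - destruct IH as [K' [HK' [Bs' HB']]]; [intros; apply H; simpl; auto|].
    destruct (H X (or_introl eq_refl)) as [k [Hk [BX HBX]]].
    destruct (Hdir Bs' BX) as [Z [H1 H2]]. exists (K' + k). split; [lia|]. exists Z.
    intros Y [<-|HY].
    + apply (bad_mono _ _ k _ BX); auto; lia.
    + apply (bad_mono _ _ K' _ Bs'); auto; lia.
Qed.

Lemma divmod_code x i r : i < r -> (x * r + i) / r = x /\ (x * r + i) mod r = i.
Proof.
  intros H. split.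
  - symmetry. apply (Nat.div_unique _ _ _ i); lia.
  - symmetry. apply (Nat.mod_unique _ _ x); lia.
Qed.

Lemma LB (Huniq : unique_restrictions E) (Hexp : expansion_property E) (Hdir : directed CE)
  (M : ob CE -> nat) (l : list (ob CE)) :
  NoDup l -> (forall X, In X l -> U X = A /\ ~ hprop CE X (M X)) ->
  forall t, hprop C A t -> list_sum (map (fun X => S (M X)) l) <= t.
Proof.
  intros Hnd Hl t Ht. destruct l as [|X0 l0] eqn:El; [simpl; lia|]. rewrite <- El in *.
  set (r := length l). assert (Hr : 1 <= r) by (unfold r; rewrite El; simpl; lia).
  destruct (common_bad Hdir M l X0) as [K [HK [Bs HBs]]].
  { intros X HX. apply not_hprop_bad, Hl, HX. }
  destruct (Hexp (U Bs)) as [B' HB'].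
  destruct (Ht (K * r) ltac:(nia) B') as [Cc HCc].
  destruct (U_surj C E Cc) as [Cs <-].
  set (chiX := fun X : ob CE => epsilon (inhabits (fun _ : hom X Cs => 0))
     (fun chi : hom X Cs -> nat => (forall g, chi g < K) /\
        forall w vals, (forall g : hom X Bs, In (chi (comp w g)) vals) -> M X < length vals)).
  assert (chiX_spec : forall X, In X l -> (forall g, chiX X g < K) /\
        forall w vals, (forall g : hom X Bs, In (chiX X (comp w g)) vals) -> M X < length vals).
  { intros X HX. unfold chiX. apply epsilon_spec. apply (HBs X HX Cs). }
  set (idx := fun X : ob CE => epsilon (inhabits 0) (fun i => nth_error l i = Some X)).
  assert (idx_spec : forall X, In X l -> nth_error l (idx X) = Some X).
  { intros X HX. unfold idx. apply epsilon_spec. apply In_nth_error; auto. }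
  assert (idx_lt : forall X, In X l -> idx X < r).
  { intros X HX. apply nth_error_Some. rewrite idx_spec; auto. discriminate. }
  set (Pred := fun (f : hom A (U Cs)) (v : nat) => exists X (p : U X = A) (g : hom X Cs),
          In X l /\ tr p eq_refl (Uh g) = f /\ v = chiX X g * r + idx X).
  set (chi := fun f => epsilon (inhabits 0) (fun v => Pred f v \/ (~ (exists v', Pred f v') /\ v = 0))).
  assert (chi_spec : forall f, Pred f (chi f) \/ (~ (exists v', Pred f v') /\ chi f = 0)).
  { intros f. unfold chi. apply (epsilon_spec (inhabits 0) (fun v => Pred f v \/ (~ (exists v', Pred f v') /\ v = 0))).
    destruct (classic (exists v', Pred f v')) as [[v Hv]|Hn]; eauto. }
  assert (chi_eq : forall X (p : U X = A) (g : hom X Cs), In X l ->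
            chi (tr p eq_refl (Uh g)) = chiX X g * r + idx X).
  { intros X p g HX. destruct (chi_spec (tr p eq_refl (Uh g))) as [[X' [p' [g' [HX' [Heq Hv]]]]]|[Hn _]].
    - destruct (Huniq Cs A (tr p eq_refl (Uh g))) as [X'' [_ Hu]].
      assert (X' = X).
      { rewrite (Hu X'), (Hu X); auto; split; auto using lifts_intro; rewrite <- Heq; apply lifts_intro. }
      subst X'. rewrite (proof_irrelevance _ p' p) in Heq. apply tr_inj, U_inj in Heq. subst g'. auto.
    - exfalso. apply Hn. exists (chiX X g * r + idx X), X, p, g. auto. }
  destruct (HCc chi) as [w [vals [Hlen Hv]]].
  { intros f. destruct (chi_spec f) as [[X [p [g [HX [_ ->]]]]]|[_ ->]]; [|nia].
    pose proof (proj1 (chiX_spec X HX) g). pose proof (idx_lt X HX). nia. }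
  destruct (Huniq Cs B' w) as [Bs'' [[_ Hlw] _]].
  apply lifts_iff in Hlw as [q [q2 [ws Hws]]]. subst B'.
  rewrite (proof_irrelevance _ q2 eq_refl) in Hws. simpl in Hws. subst w.
  destruct (HB' Bs Bs'' eq_refl eq_refl) as [u].
  set (blk := fun X => map (fun v => v / r) (filter (fun v => Nat.eqb (v mod r) (idx X)) vals)).
  assert (Hblk : forall X, In X l -> M X < length (blk X)).
  { intros X HX. destruct (Hl X HX) as [pX _]. apply ((proj2 (chiX_spec X HX)) (comp ws u)).
    intros g. specialize (Hv (tr pX eq_refl (Uh (comp u g)))).
    replace (comp (Uh ws) (tr pX eq_refl (Uh (comp u g)))) with (tr pX eq_refl (Uh (comp ws (comp u g)))) in Hv
      by (apply (Uh_tr_comp pX eq_refl eq_refl)).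
    rewrite chi_eq in Hv by auto. rewrite comp_assoc in Hv.
    destruct (divmod_code (chiX X (comp (comp ws u) g)) (idx X) r (idx_lt X HX)) as [Hd Hm].
    unfold blk. apply in_map_iff. eexists; split; [exact Hd|]. apply filter_In. split; auto.
    apply Nat.eqb_eq; auto. }
  transitivity (list_sum (map (fun X => length (filter (fun v => Nat.eqb (v mod r) (idx X)) vals)) l)).
  { apply sum_le. intros X HX. specialize (Hblk X HX). unfold blk in Hblk. rewrite length_map in Hblk. lia. }
  rewrite double_count. transitivity (list_sum (map (fun _ => 1) vals)); [|rewrite sum_ones; auto].
  apply sum_le. intros v _. apply filter_le1; auto.
  intros X Y HX HY EX EY. apply Nat.eqb_eq in EX, EY.
  assert (Some X = Some Y) as HS; [|injection HS; auto].
  rewrite <- idx_spec, <- EX, EY, idx_spec; auto.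
Qed.

End Exp.

Section Bij.
Local Open Scope nat_scope.
Lemma NoDup_map_on {T T'} (f : T -> T') (l : list T) :
  (forall x y, In x l -> In y l -> f x = f y -> x = y) -> NoDup l -> NoDup (map f l).
Proof.
  induction l as [|x l IH]; intros Hi N; simpl; [constructor|]. inversion N; subst.
  constructor.
  - intros Hin. apply in_map_iff in Hin as [y [Hy Hyl]]. assert (y = x) by (apply Hi; simpl; auto). subst; auto.
  - apply IH; auto. intros; apply Hi; simpl; auto.
Qed.

Lemma has_card_bij {T T'} (P : T -> Prop) (Q : T' -> Prop) (phi : T -> T') (x0 : T) :
  (forall x, P x -> Q (phi x)) -> (forall x y, P x -> P y -> phi x = phi y -> x = y) ->
  (forall y, Q y -> exists x, P x /\ phi x = y) -> forall m, has_card Q m -> has_card P m.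
Proof.
  intros H1 H2 H3 m [lQ [[N HQ] <-]].
  set (inv := fun y => epsilon (inhabits x0) (fun x => P x /\ phi x = y)).
  assert (Hinv : forall y, Q y -> P (inv y) /\ phi (inv y) = y).
  { intros y Hy. unfold inv. apply (epsilon_spec (inhabits x0) (fun x => P x /\ phi x = y)). auto. }
  exists (map inv lQ). split; [split|apply length_map].
  - apply NoDup_map_on; auto. intros y y' Hy Hy' E.
    apply HQ in Hy, Hy'. rewrite <- (proj2 (Hinv y Hy)), <- (proj2 (Hinv y' Hy')), E. auto.
  - intros x. split.
    + intros Px. apply in_map_iff. exists (phi x). split; [|apply HQ; auto].
      apply H2; auto; apply Hinv, H1; auto.
    + intros Hx. apply in_map_iff in Hx as [y [<- Hy]]. apply Hinv, HQ, Hy.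
Qed.
End Bij.

Ltac rnorm := repeat rewrite <- comp_assoc.

Section Exp2.
Local Open Scope nat_scope.
Context (C : Cat) (E : Expansion C).
Notation CE := (ecat E).
Notation U := (Uob E).
Notation Uh := (Uhom E).
Context (Hreas : reasonable E) (Huniq : unique_restrictions E).

Lemma tr_idm_sym (Z W : ob C) (q : Z = W) : tr q eq_refl (idm Z) = tr eq_refl (eq_sym q) (idm W).
Proof. destruct q; reflexivity. Qed.

Lemma lift_aut_iso (X R : ob CE) (Z : ob C) (p : U X = Z) (q : U R = Z) (g : hom X R) (al : hom Z Z) :
  is_aut Z al -> tr p q (Uh g) = al -> exists g' : hom R X, comp g' g = idm X /\ comp g g' = idm R.
Proof.
  intros Hal Hg. destruct q. destruct Hal as [al' [Ha1 Ha2]].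
  destruct (Hreas (U R) (U R) al' R eq_refl) as [Y' [_ HlY]].
  apply lifts_iff in HlY as [p1 [q1 [g1 Hg1]]]. rewrite (proof_irrelevance _ p1 eq_refl) in Hg1.
  assert (E1 : tr p q1 (Uh (comp g1 g)) = idm (U R)).
  { rewrite (Uh_tr_comp C E p eq_refl q1), Hg1. 
    rewrite Hg. auto. }
  set (e0 := tr eq_refl (eq_sym q1) (idm (U R))).
  assert (L1 : lifts_to E X Y' e0).
  { apply lifts_iff. exists p, eq_refl, (comp g1 g). unfold e0. rewrite <- E1, tr_tr.
    f_equal; apply proof_irrelevance. }
  assert (L2 : lifts_to E Y' Y' e0).
  { apply lifts_iff. exists q1, eq_refl, (idm Y'). unfold e0. rewrite U_id. apply tr_idm_sym. }
  destruct (Huniq Y' (U R) e0) as [X'' [_ Hu]].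
  assert (X = Y') by (rewrite (Hu X), (Hu Y'); auto). subst Y'.
  rewrite (proof_irrelevance _ q1 p) in *. exists g1. split.
  - apply U_inj. apply (tr_inj p p). 
    rewrite U_id, tr_id. exact E1.
  - apply U_inj. rewrite U_id. change (tr eq_refl eq_refl (Uh (comp g g1)) = idm (U R)).
    rewrite (Uh_tr_comp C E eq_refl p eq_refl), Hg1. 
    simpl in Hg. rewrite Hg. auto.
Qed.

Lemma lift_aut_isomorphic (X R : ob CE) (Z : ob C) (al : hom Z Z) :
  is_aut Z al -> lifts_to E X R al -> isomorphic X R.
Proof.
  intros Ha Hl. apply lifts_iff in Hl as [p [q [g Hg]]].
  destruct (lift_aut_iso X R Z p q g al Ha Hg) as [g' [H1 H2]]. exists g, g'. auto.
Qed.

Lemma lifts_tr (X Y : ob CE) (Z W Z' W' : ob C) (p : Z = Z') (q : W = W') (e : hom Z W) :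
  lifts_to E X Y e -> lifts_to E X Y (tr p q e).
Proof.
  intros H. apply lifts_iff in H as [p0 [q0 [g Hg]]]. apply lifts_iff.
  exists (eq_trans p0 p), (eq_trans q0 q), g. rewrite <- tr_tr, Hg. auto.
Qed.

Lemma tr_sym_cancel (Z W Z' W' : ob C) (p : Z = Z') (q : W = W') (e : hom Z W) :
  tr (eq_sym p) (eq_sym q) (tr p q e) = e.
Proof. destruct p, q; reflexivity. Qed.

Lemma tr_back (Z W W' : ob C) (q : W' = W) (e : hom Z W) : tr eq_refl q (tr eq_refl (eq_sym q) e) = e.
Proof. destruct q; reflexivity. Qed.

Context (A : ob C) (autsA : list (hom A A)) (HndA : NoDup autsA) (HautsA : forall al, is_aut A al <-> In al autsA).

Definition cnt (X R : ob CE) : nat := length (filter (fun al => pb (lifts_to E X R al)) autsA).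

Lemma class_card (X R : ob CE) (pX : U X = A) (pR : U R = A) :
  isomorphic X R -> has_card (is_aut X) (cnt X R).
Proof.
  intros [h [h' [H1 H2]]].
  apply (has_card_bij (is_aut X) (fun al => is_aut A al /\ lifts_to E X R al)
           (fun b => tr pX pR (Uh (comp h b))) (idm X)).
  - intros b [b' [Hb1 Hb2]]. split.
    + exists (tr pR pX (Uh (comp b' h'))). split.
      * rewrite <- (Uh_tr_comp C E pR pX pR). rnorm.
        rewrite (cancel _ b b' _ Hb1), H2, U_id, tr_id. auto.
      * rewrite <- (Uh_tr_comp C E pX pR pX). rnorm.
        rewrite (cancel _ h' h _ H1), Hb2, U_id, tr_id. auto.
    + apply lifts_intro.
  - intros b1 b2 _ _ Hb. apply tr_inj, U_inj in Hb.
    rewrite <- (comp_id_l _ _ _ b1), <- (comp_id_l _ _ _ b2), <- H1, <- !comp_assoc, Hb. auto.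
  - intros al [Ha Hl]. apply lifts_iff in Hl as [p' [q' [g Hg]]].
    rewrite (proof_irrelevance _ p' pX), (proof_irrelevance _ q' pR) in Hg.
    destruct (lift_aut_iso X R A pX pR g al Ha Hg) as [g' [G1 G2]].
    exists (comp h' g). split.
    + exists (comp g' h). split.
      * rnorm. rewrite (cancel _ g g' _ G2). auto.
      * rnorm. rewrite (cancel _ h h' _ H2). auto.
    + rewrite <- Hg. rewrite (cancel _ h h' _ H2). auto.
  - exists (filter (fun al => pb (lifts_to E X R al)) autsA). split; [split|auto].
    + apply NoDup_filter; auto.
    + intros al. rewrite filter_In, pb_true, <- HautsA. tauto.
Qed.

Lemma cnt_zero (X R : ob CE) : ~ isomorphic X R -> cnt X R = 0.
Proof.
  intros Hn. unfold cnt. destruct (filter _ autsA) eqn:F; auto. exfalso.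
  assert (In h (filter (fun al => pb (lifts_to E X R al)) autsA)) as Hin by (rewrite F; simpl; auto).
  apply filter_In in Hin as [Hin Hp]. apply (proj1 (pb_true _)) in Hp. apply Hn.
  apply (lift_aut_isomorphic X R A h); auto. apply HautsA; auto.
Qed.

Lemma cnt_partition (l : list (ob CE)) (R : ob CE) (pR : U R = A) :
  NoDup l -> (forall X, U X = A -> In X l) -> list_sum (map (fun X => cnt X R) l) = length autsA.
Proof.
  intros Nl Hl. unfold cnt. rewrite double_count. rewrite <- (sum_ones autsA). apply sum_ext.
  intros al Hal. 
  destruct (Huniq R A (tr eq_refl (eq_sym pR) al)) as [X0 [[pX0 HX0] Hu]].
  apply (filter_eq1 _ _ X0); auto.
  - apply (proj2 (pb_true _)). apply lifts_tr with (p := eq_refl) (q := pR) in HX0.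
    rewrite tr_back in HX0. exact HX0.
  - intros Y _ HY. apply (proj1 (pb_true _)) in HY. apply Hu. split.
    + apply lifts_iff in HY as [p [_ _]]; auto.
    + apply lifts_tr; auto.
Qed.

End Exp2.

Lemma Qsum_lemma {T} (l : list T) (f g : T -> nat) (a : nat) : a <> 0%nat ->
  (fold_right Qplus 0 (map (fun x => inject_Z (Z.of_nat (f x)) / inject_Z (Z.of_nat a) * inject_Z (Z.of_nat (g x))) l)
   == inject_Z (Z.of_nat (list_sum (map (fun x => (f x * g x)%nat) l))) / inject_Z (Z.of_nat a))%Q.
Proof.
  intros Ha. assert (Hq : ~ (inject_Z (Z.of_nat a) == 0)%Q).
  { intros H. change 0%Q with (inject_Z 0) in H. apply (proj1 (inject_Z_injective _ _)) in H. lia. }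
  induction l as [|x l IH]; simpl.
  - field; auto.
  - rewrite IH. rewrite Znat.Nat2Z.inj_add, inject_Z_plus, Znat.Nat2Z.inj_mul, inject_Z_mult. field; auto.
Qed.

Theorem corollary6p4 (C : Cat) (E : Expansion C)
  (Hreas : reasonable E) (Huniq : unique_restrictions E)
  (Hexp : expansion_property E)
  (Hmono : all_mono C) (Hdir : directed (ecat E))
  (A : ob C) (HautA : finite_pred (@is_aut C A)) :
  (* (a) *)
  ((tdeg A <> None <->
     (finite_pred (fun X : ob (ecat E) => Uob E X = A) /\
      forall X : ob (ecat E), Uob E X = A -> tdeg X <> None)) /\
   (tdeg A <> None ->
     forall l : list (ob (ecat E)),
       enumerates l (fun X => Uob E X = A) ->
       (inject_Z (Z.of_nat (tval (tdeg A))) ==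
        fold_right Qplus 0
          (map (fun X : ob (ecat E) =>
                  (inject_Z (Z.of_nat (card (@is_aut (ecat E) X))) /
                   inject_Z (Z.of_nat (card (@is_aut C A)))) *
                  inject_Z (Z.of_nat (tval (tdeg X)))) l))%Q)) /\
  (* (b) *)
  (finite_pred (fun X : ob (ecat E) => Uob E X = A) ->
   (forall X : ob (ecat E), Uob E X = A -> tdeg X <> None) ->
   forall (n : nat) (rep : nat -> ob (ecat E)),
     (forall i, (i < n)%nat -> Uob E (rep i) = A) ->
     (forall i j, (i < n)%nat -> (j < n)%nat -> isomorphic (rep i) (rep j) -> i = j) ->
     (forall X : ob (ecat E), Uob E X = A -> exists i, (i < n)%nat /\ isomorphic X (rep i)) ->
     tdeg A = Some (list_sum (map (fun i => tval (tdeg (rep i))) (seq 0 n)))).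
Proof.
  destruct (finite_enum _ HautA) as [autsA [HndA HautsA]].
  set (a := length autsA).
  assert (Hca : card (@is_aut C A) = a) by (apply card_spec, enum_has_card; split; auto).
  assert (Ha : (0 < a)%nat) by (eapply a_pos; eauto).
  pose proof (ecat_mono C E Hmono) as HmE.
  assert (isorefl : forall X : ob (ecat E), isomorphic X X).
  { intros X. exists (idm X), (idm X). rewrite comp_id_l. auto. }
  assert (autX : forall X, Uob E X = A -> exists lX, enumerates lX (@is_aut (ecat E) X) /\ length lX = card (@is_aut (ecat E) X)).
  { intros X HX. destruct (class_card C E Hreas Huniq A autsA HndA HautsA X X HX HX (isorefl X)) as [lX [Hen Hlen]].
    exists lX. split; auto. symmetry. apply card_spec. exists lX; auto. }
  set (aX := fun X : ob (ecat E) => card (@is_aut (ecat E) X)).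
  assert (aX_pos : forall X, Uob E X = A -> (0 < aX X)%nat).
  { intros X HX. destruct (autX X HX) as [lX [[N H] Hl]]. unfold aX; cbv beta; rewrite <- Hl. eapply a_pos; eauto. }
  assert (F1 : forall X m, Uob E X = A -> tdeg X = Some m ->
     hprop (ecat E) X (aX X * m) /\ forall t, hprop (ecat E) X t -> (aX X * m <= t)%nat).
  { intros X m HX Hm. destruct (autX X HX) as [lX [[N H] Hl]]. unfold aX. rewrite <- Hl.
    apply deg_link; auto. }
  assert (F2 : forall X, Uob E X = A -> tdeg X = None -> forall t, ~ hprop (ecat E) X t).
  { intros X HX Hn. destruct (autX X HX) as [lX [[N H] Hl]]. eapply deg_link_None; eauto. }
  assert (core : forall l, NoDup l -> (forall X, Uob E X = A <-> In X l) ->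
     (forall X, Uob E X = A -> tdeg X <> None) ->
     exists n, tdeg A = Some n /\ (a * n = list_sum (map (fun X => aX X * tval (tdeg X)) l))%nat).
  { intros l Nl Hl Hall. set (N := fun X => (aX X * tval (tdeg X))%nat).
    assert (HN : forall X, In X l -> (1 <= N X)%nat /\ hprop (ecat E) X (N X) /\ forall t, hprop (ecat E) X t -> (N X <= t)%nat).
    { intros X HXl. assert (HX : Uob E X = A) by (apply Hl; auto).
      destruct (tdeg X) as [m|] eqn:EX; [|destruct (Hall X HX EX)].
      destruct (tdeg_Some _ _ _ EX) as [Hm0 _]. pose proof (aX_pos X HX).
      destruct (F1 X m HX EX) as [H1 H2]. unfold N. rewrite EX. simpl. split; [nia|]. auto. }
    apply deg_from_hom; auto.
    - apply UB; auto. + intros X HX; apply Hl; auto. + intros X HX. split; [apply Hl; auto|]. apply HN; auto.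
    - intros t Ht. 
      pose proof (LB C E A Huniq Hexp Hdir (fun X => N X - 1)%nat l Nl) as HLB.
      assert (list_sum (map (fun X => S (N X - 1)) l) = list_sum (map N l)) as <-.
      { apply sum_ext. intros X HX. destruct (HN X HX) as [H1 _]. lia. }
      apply HLB; auto. intros X HX. split; [apply Hl; auto|]. intros Hh.
      destruct (HN X HX) as [H1 [_ H3]]. specialize (H3 _ Hh). lia. }
  assert (a1 : tdeg A <> None -> finite_pred (fun X : ob (ecat E) => Uob E X = A) /\
      forall X : ob (ecat E), Uob E X = A -> tdeg X <> None).
  { intros HA. destruct (tdeg A) as [n|] eqn:EA; [|congruence].
    destruct (deg_link C A autsA HndA HautsA Hmono n EA) as [Hh _]. fold a in Hh.
    split.
    - apply NNPP; intros Hnf. destruct (not_finite_lists _ Hnf (S (a * n))) as [L [NL [LL HL]]].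
      pose proof (LB C E A Huniq Hexp Hdir (fun _ => 0%nat) L NL
                    (fun X HX => conj (HL X HX) (hprop_0 _ X)) _ Hh) as H.
      rewrite sum_ones, LL in H. lia.
    - intros X HX HXn. 
      pose proof (LB C E A Huniq Hexp Hdir (fun _ => (a * n)%nat) (X :: nil) ltac:(repeat constructor; simpl; tauto)) as H.
      simpl in H. assert (S (a * n + 0) <= a * n)%nat; [|lia].
      apply H; auto. intros Y [<-|[]]. split; auto. }
  split; [split; [split; [exact a1|]|]|].
  - intros [Hfin Hall]. destruct (finite_enum _ Hfin) as [l [Nl Hl]].
    destruct (core l Nl Hl Hall) as [n [-> _]]. discriminate.
  - intros HA l [Nl Hl]. destruct (a1 HA) as [_ Hall].
    destruct (core l Nl Hl Hall) as [n [EA Heq]]. rewrite EA. simpl. rewrite Hca.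
    rewrite (Qsum_lemma l (fun X => card (@is_aut (ecat E) X)) (fun X => tval (tdeg X)) a) by lia.
    unfold aX in Heq; cbv beta in Heq. rewrite <- Heq. rewrite Znat.Nat2Z.inj_mul, inject_Z_mult. field.
    intros H. change 0%Q with (inject_Z 0) in H. apply (proj1 (inject_Z_injective _ _)) in H. lia.
  - intros Hfin Hall n rep Hrep Hninj Hcov. destruct (finite_enum _ Hfin) as [l [Nl Hl]].
    destruct (core l Nl Hl Hall) as [m [EA Heq]]. rewrite EA. f_equal.
    apply (Nat.mul_cancel_l _ _ a); [lia|]. rewrite Heq.
    transitivity (list_sum (map (fun X => list_sum (map (fun i => cnt C E A autsA X (rep i) * tval (tdeg (rep i))) (seq 0 n))) l))%nat.
    + apply sum_ext. intros X HXl. assert (HX : Uob E X = A) by (apply Hl; auto).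
      destruct (Hcov X HX) as [i0 [Hi0 Hiso]].
      rewrite (sum_single _ n i0); auto.
      * rewrite (iso_tdeg _ _ _ Hiso). f_equal. unfold aX. apply card_spec.
        apply class_card; auto.
      * intros i Hi Hne. rewrite cnt_zero; auto. intros Hiso'. apply Hne.
        symmetry. apply Hninj; auto. eapply iso_trans; [apply iso_sym|]; eauto.
    + rewrite sum_swap.
      transitivity (list_sum (map (fun i => tval (tdeg (rep i)) * a) (seq 0 n)))%nat.
      * apply sum_ext. intros i Hi. apply in_seq in Hi. rewrite sum_const_mul.
        rewrite (cnt_partition C E Huniq A autsA l (rep i)); auto; [|apply Hrep; lia|intros; apply Hl; auto].
        fold a. lia.
      * rewrite sum_const_mul. lia.
Qed.
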